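(* Let $T:V\to\mathfrak g$ be a relative Rota-Baxter operator on a Lie-Yamaguti algebra $(\mathfrak g,[\cdot,\cdot],[\![\cdot,\cdot,\cdot]\!])$ with respect to a representation $(V;\rho,\mu)$. Define $*:\otimes^2V\to V$ and $\{\cdot,\cdot,\cdot\}:\otimes^3V\to V$ by $u*v=\rho(Tu)v$ and $\{u,v,w\}=\mu(Tv,Tw)u$ for $u,v,w\in V$. Then $(V,*,\{\cdot,\cdot,\cdot\})$ is a pre-Lie-Yamaguti algebra.
   Context: All vector spaces are over a field of characteristic $0$. A Lie-Yamaguti algebra is a vector space $\mathfrak g$ with a bilinear skew-symmetric $[\cdot,\cdot]$ and a trilinear $[\![\cdot,\cdot,\cdot]\!]$ skew-symmetric in its first two arguments such that for all $x,y,z,w,t$: (1) $[[x,y],z]+[[y,z],x]+[[z,x],y]+[\![x,y,z]\!]+[\![y,z,x]\!]+[\![z,x,y]\!]=0$; (2) $[\![[x,y],z,w]\!]+[\![[y,z],x,w]\!]+[\![[z,x],y,w]\!]=0$; (3) $[\![x,y,[z,w]]\!]=[[\![x,y,z]\!],w]+[z,[\![x,y,w]\!]]$; (4) $[\![x,y,[\![z,w,t]\!]]\!]=[\![[\![x,y,z]\!],w,t]\!]+[\![z,[\![x,y,w]\!],t]\!]+[\![z,w,[\![x,y,t]\!]]\!]$. A representation $(V;\rho,\mu)$ of $\mathfrak g$ is a linear $\rho:\mathfrak g\to\mathfrak{gl}(V)$ and bilinear $\mu:\otimes^2\mathfrak g\to\mathfrak{gl}(V)$ such that, with $D_{\rho,\mu}(x,y):=\mu(y,x)-\mu(x,y)+[\rho(x),\rho(y)]-\rho([x,y])$: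 $\mu([x,y],z)-\mu(x,z)\rho(y)+\mu(y,z)\rho(x)=0$; $\mu(x,[y,z])-\rho(y)\mu(x,z)+\rho(z)\mu(x,y)=0$; $\rho([\![x,y,z]\!])=[D_{\rho,\mu}(x,y),\rho(z)]$; $\mu(z,w)\mu(x,y)-\mu(y,w)\mu(x,z)-\mu(x,[\![y,z,w]\!])+D_{\rho,\mu}(y,z)\mu(x,w)=0$; $\mu([\![x,y,z]\!],w)+\mu(z,[\![x,y,w]\!])=[D_{\rho,\mu}(x,y),\mu(z,w)]$. A relative Rota-Baxter operator on $\mathfrak g$ with respect to $(V;\rho,\mu)$ is a linear map $T:V\to\mathfrak g$ with $[Tu,Tv]=T(\rho(Tu)v-\rho(Tv)u)$ and $[\![Tu,Tv,Tw]\!]=T(D_{\rho,\mu}(Tu,Tv)w+\mu(Tv,Tw)u-\mu(Tu,Tw)v)$ for all $u,v,w\in V$. A pre-Lie-Yamaguti algebra is a vector space $A$ with a bilinear operation $*$ and a trilinear operation $\{\cdot,\cdot,\cdot\}$ such that, writing $[x,y]_C=x*y-y*x$, $(x,y,z)=(x*y)*z-x*(y*z)$ and $\{x,y,z\}_D=\{z,y,x\}-\{z,x,y\}+(y,x,z)-(x,y,z)$, for all $x,y,z,w,t\in A$: (P1) $\{z,[x,y]_C,w\}-\{y*z,x,w\}+\{x*z,y,w\}=0$; (P2) $\{x,y,[z,w]_C\}=z*\{x,y,w\}-w*\{x,y,z\}$; (P3) $\{\{x,y,z\},w,t\}-\{\{x,y,w\},z,t\}-\{x,y,\{z,w,t\}_D\}-\{x,y,\{z,w,t\}\}+\{x,y,\{w,z,t\}\}+\{z,w,\{x,y,t\}\}_D=0$;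 (P4) $\{z,\{x,y,w\}_D,t\}+\{z,\{x,y,w\},t\}-\{z,\{y,x,w\},t\}+\{z,w,\{x,y,t\}_D\}+\{z,w,\{x,y,t\}\}-\{z,w,\{y,x,t\}\}=\{x,y,\{z,w,t\}\}_D-\{\{x,y,z\}_D,w,t\}$; (P5) $\{x,y,z\}_D*w+\{x,y,z\}*w-\{y,x,z\}*w=\{x,y,z*w\}_D-z*\{x,y,w\}_D$. *)

(* Defs.v *)
From HB Require Import structures.
From mathcomp Require Import all_boot all_order all_algebra.
Set Implicit Arguments. Unset Strict Implicit. Unset Printing Implicit Defensive.
Import GRing.Theory.
Local Open Scope ring_scope.

Section Defs.
Variable K : fieldType.

Definition lin1 (U W : lmodType K) (f : U -> W) : Prop :=
  forall (a : K) (x y : U), f (a *: x + y) = a *: f x + f y.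
Definition lin2 (U1 U2 W : lmodType K) (f : U1 -> U2 -> W) : Prop :=
  (forall y, lin1 (fun x => f x y)) /\ (forall x, lin1 (f x)).
Definition lin3 (U1 U2 U3 W : lmodType K) (f : U1 -> U2 -> U3 -> W) : Prop :=
  (forall y z, lin1 (fun x => f x y z)) /\ (forall x z, lin1 (fun y => f x y z))
  /\ (forall x y, lin1 (f x y)).

Definition is_LieYamaguti (g : lmodType K) (br : g -> g -> g)
    (tr : g -> g -> g -> g) : Prop :=
  [/\ lin2 br, lin3 tr,
      (forall x y, br x y = - br y x),
      (forall x y z, tr x y z = - tr y x z) &
  [/\ (forall x y z, br (br x y) z + br (br y z) x + br (br z x) y
                     + tr x y z + tr y z x + tr z x y = 0),
      (forall x y z w, tr (br x y) z w + tr (br y z) x w + tr (br z x) y w = 0),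
      (forall x y z w, tr x y (br z w) = br (tr x y z) w + br z (tr x y w)) &
      (forall x y z w t, tr x y (tr z w t)
          = tr (tr x y z) w t + tr z (tr x y w) t + tr z w (tr x y t))]].

Definition Drm (g V : lmodType K) (br : g -> g -> g) (rho : g -> V -> V)
    (mu : g -> g -> V -> V) (x y : g) (v : V) : V :=
  mu y x v - mu x y v + (rho x (rho y v) - rho y (rho x v)) - rho (br x y) v.

(* representation (V; rho, mu): rho linear g -> gl(V), mu bilinear g x g -> gl(V);
   identities in gl(V) are stated pointwise on v : V, products are compositions *)
Definition is_LYrep (g V : lmodType K) (br : g -> g -> g) (tr : g -> g -> g -> g)
    (rho : g -> V -> V) (mu : g -> g -> V -> V) : Prop :=
  let D := Drm br rho mu in
  [/\ lin2 rho, lin3 mu,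
      (forall x y z v, mu (br x y) z v - mu x z (rho y v) + mu y z (rho x v) = 0),
      (forall x y z v, mu x (br y z) v - rho y (mu x z v) + rho z (mu x y v) = 0) &
  [/\ (forall x y z v, rho (tr x y z) v = D x y (rho z v) - rho z (D x y v)),
      (forall x y z w v, mu z w (mu x y v) - mu y w (mu x z v)
                          - mu x (tr y z w) v + D y z (mu x w v) = 0) &
      (forall x y z w v, mu (tr x y z) w v + mu z (tr x y w) v
                          = D x y (mu z w v) - mu z w (D x y v))]].

Definition is_relRB (g V : lmodType K) (br : g -> g -> g) (tr : g -> g -> g -> g)
    (rho : g -> V -> V) (mu : g -> g -> V -> V) (T : V -> g) : Prop :=
  [/\ lin1 T,
      (forall u v, br (T u) (T v) = T (rho (T u) v - rho (T v) u)) &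
      (forall u v w, tr (T u) (T v) (T w)
          = T (Drm br rho mu (T u) (T v) w + mu (T v) (T w) u - mu (T u) (T w) v))].

Definition is_preLieYamaguti (A : lmodType K) (m : A -> A -> A)
    (tb : A -> A -> A -> A) : Prop :=
  let brC := fun x y => m x y - m y x in
  let ass := fun x y z => m (m x y) z - m x (m y z) in
  let tbD := fun x y z => tb z y x - tb z x y + ass y x z - ass x y z in
  [/\ lin2 m, lin3 tb,
      (forall x y z w, tb z (brC x y) w - tb (m y z) x w + tb (m x z) y w = 0),
      (forall x y z w, tb x y (brC z w) = m z (tb x y w) - m w (tb x y z)) &
  [/\ (forall x y z w t, tb (tb x y z) w t - tb (tb x y w) z t - tb x y (tbD z w t)
          - tb x y (tb z w t) + tb x y (tb w z t) + tbD z w (tb x y t) = 0),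
      (forall x y z w t, tb z (tbD x y w) t + tb z (tb x y w) t - tb z (tb y x w) t
          + tb z w (tbD x y t) + tb z w (tb x y t) - tb z w (tb y x t)
          = tbD x y (tb z w t) - tb (tbD x y z) w t) &
      (forall x y z w, m (tbD x y z) w + m (tb x y z) w - m (tb y x z) w
          = tbD x y (m z w) - m z (tbD x y w))]].

End Defs.

(* Main.v *)
Require Import Defs.
From mathcomp Require Import all_boot all_order all_algebra.
Import GRing.Theory.
Local Open Scope ring_scope.

Section Helpers.
Variable K : fieldType.
Variables U W : lmodType K.
Variable f : U -> W.
Hypothesis hf : lin1 f.
Lemma l1_0 : f 0 = 0.
Proof. have := hf 1 0 0; rewrite scaler0 addr0 scale1r => h; apply: (addIr (f 0)); by rewrite add0r -h. Qed.
Lemma l1_D x y : f (x + y) = f x + f y.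
Proof. by have := hf 1 x y; rewrite !scale1r. Qed.
Lemma l1_N x : f (- x) = - f x.
Proof. by have := hf (-1) x 0; rewrite !scaleN1r addr0 l1_0 addr0. Qed.
Lemma l1_B x y : f (x - y) = f x - f y.
Proof. by rewrite l1_D l1_N. Qed.
End Helpers.
Arguments l1_0 {K U W f} hf.
Arguments l1_D {K U W f} hf x y.
Arguments l1_N {K U W f} hf x.
Arguments l1_B {K U W f} hf x y.

Lemma zA (M : zmodType) (a b c d e f : M) :
  a - b + (c - d) - (e - f) = a - b + (f - d) - (e - c).
Proof.
rewrite !opprB !addrA; congr (_ + _).
rewrite [RHS]addrAC [LHS]addrAC; congr (_ - _); exact: addrAC.
Qed.

Lemma zB (M : zmodType) (a b c d e f : M) :
  a - b - (c + d - e) + f = a - b - c - d + e + f.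
Proof. by rewrite !opprD opprK !addrA. Qed.

Theorem theorem3p13 (K : fieldType) (Hchar : [pchar K] =i pred0)
    (g V : lmodType K) (br : g -> g -> g) (tr : g -> g -> g -> g)
    (rho : g -> V -> V) (mu : g -> g -> V -> V) (T : V -> g) :
  is_LieYamaguti br tr ->
  is_LYrep br tr rho mu ->
  is_relRB br tr rho mu T ->
  is_preLieYamaguti (fun u v => rho (T u) v) (fun u v w => mu (T v) (T w) u).
Proof.
move=> _ [[rl1 rl2] [ml1 [ml2 ml3]] R1 R2 [R3 R4 R5]] [TL TB TT].
have rhoT3 : forall a b c w, rho (T (a + b - c)) w = rho (T a) w + rho (T b) w - rho (T c) w.
  move=> a b c w; rewrite (l1_B TL) (l1_D TL).
  by rewrite (l1_B (rl1 w)) (l1_D (rl1 w)).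
have muT31 : forall a b c d w, mu (T (a + b - c)) d w = mu (T a) d w + mu (T b) d w - mu (T c) d w.
  move=> a b c d w; rewrite (l1_B TL) (l1_D TL).
  by rewrite (l1_B (ml1 d w)) (l1_D (ml1 d w)).
have muT32 : forall a b c d w, mu d (T (a + b - c)) w = mu d (T a) w + mu d (T b) w - mu d (T c) w.
  move=> a b c d w; rewrite (l1_B TL) (l1_D TL).
  by rewrite (l1_B (ml2 d w)) (l1_D (ml2 d w)).
have KeyD : forall x y z,
  mu (T y) (T x) z - mu (T x) (T y) z
   + (rho (T (rho (T y) x)) z - rho (T y) (rho (T x) z))
   - (rho (T (rho (T x) y)) z - rho (T x) (rho (T y) z))
  = Drm br rho mu (T x) (T y) z.
  move=> x y z; rewrite /Drm TB (l1_B TL) (l1_B (rl1 z)); exact: zA.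
have KeyT : forall x y z,
  T (Drm br rho mu (T x) (T y) z + mu (T y) (T z) x - mu (T x) (T z) y) = tr (T x) (T y) (T z).
  by move=> x y z; rewrite TT.
rewrite /is_preLieYamaguti /=.
split.
- split=> [y|x] a u v /=.
  + by rewrite TL (rl1 y).
  + by rewrite rl2.
- split; [|split].
  + move=> y z a u v /=; exact: ml3.
  + move=> x z a u v /=; by rewrite TL ml1.
  + move=> x y a u v /=; by rewrite TL ml2.
- move=> x y z w /=.
  by rewrite -TB R1.
- move=> x y z w /=.
  rewrite -TB; apply/eqP; rewrite -subr_eq0 opprB addrA addrAC; exact/eqP/R2.
split.
- move=> x y z w t /=.
  rewrite !KeyD.
  have h := R4 (T y) (T z) (T w) (T t) x.
  rewrite -KeyT muT32 in h.
  by rewrite -h zB.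
- move=> x y z w t /=.
  have e4 : forall (X a b c : V), X + a + b - c = X + (a + b - c) by move=> *; rewrite !addrA.
  rewrite !KeyD -muT31 e4 -muT32 !KeyT R5; congr (_ - _); exact: KeyD.
- move=> x y z w /=.
  rewrite !KeyD -rhoT3 KeyT R3.
  congr (_ - _); exact: KeyD.
Qed.
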